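(* Let $\mathcal{C}\subseteq\mathbb{R}[x_1,\dots,x_n]$ be a convex cone with apex $0$ which is closed in the LF-topology of $\mathbb{R}[x_1,\dots,x_n]$. Then $\mathfrak{D}_\mathcal{C}\subseteq\mathfrak{d}_\mathcal{C}$.
   Context: $\mathfrak{d}$ is the set of linear maps $\sum_\alpha q_\alpha\partial^\alpha$ on $\mathbb{R}[x_1,\dots,x_n]$ with $q_\alpha$ a polynomial of degree $\le|\alpha|$ for all $\alpha$; $\mathfrak{D}$ is the set of those elements of $\mathfrak{d}$ with trivial kernel. For $A\in\mathfrak{d}$, $e^{tA}=\sum_kt^kA^k/k!$ is well defined since $A$ preserves each space of polynomials of degree $\le d$. $\mathfrak{D}_\mathcal{C}=\{T\in\mathfrak{D}: T\mathcal{C}\subseteq\mathcal{C}\}$ and $\mathfrak{d}_\mathcal{C}=\{A\in\mathfrak{d}: e^{tA}\in\mathfrak{D}_\mathcal{C}\ \forall t\ge0\}$. The LF-topology is the inductive limit topology of the finite-dimensional subspaces of polynomials of degree $\le d$. *)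

(* Defs.v *)
From HB Require Import structures.
From mathcomp Require Import all_boot all_algebra.
From Stdlib Require Import Reals.
From mathcomp Require Import Rstruct.
From mathcomp.multinomials Require Import mpoly.
From Coquelicot Require Hierarchy Series.

Set Implicit Arguments.
Unset Strict Implicit.
Unset Printing Implicit Defensive.

Import GRing.Theory.
Local Open Scope ring_scope.

(* Since d^alpha p = 0 when |alpha| > deg p, the (possibly infinite) formal
   sum reduces to the finite sum over monomials alpha with |alpha| < msize p
   = 1 + deg p.  p^`M[m] is the mixed partial derivative d^m. *)
Definition diffop (n : nat) (q : 'X_{1..n} -> {mpoly R[n]})
  (p : {mpoly R[n]}) : {mpoly R[n]} :=
  \sum_(m : 'X_{1..n < msize p}) q m * p^`M[m].

(* A \in d : A = sum_alpha q_alpha d^alpha with deg q_alpha <= |alpha|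
   (msize q = 1 + deg q, msize 0 = 0). *)
Definition in_d (n : nat) (A : {mpoly R[n]} -> {mpoly R[n]}) : Prop :=
  exists q : 'X_{1..n} -> {mpoly R[n]},
    (forall m, leq (msize (q m)) (mdeg m).+1) /\ (forall p, A p = diffop q p).

Definition in_D (n : nat) (A : {mpoly R[n]} -> {mpoly R[n]}) : Prop :=
  in_d A /\ (forall p, A p = 0 -> p = 0).

(* e^{tA} p = sum_k t^k A^k p / k!, computed coefficientwise in the
   finite-dimensional space of polynomials of degree <= deg p (which A \in d
   preserves): the coefficient of x^m is the sum of the real series
   sum_k t^k/k! * (A^k p)_m. *)
Definition expop (n : nat) (t : R) (A : {mpoly R[n]} -> {mpoly R[n]})
  (p : {mpoly R[n]}) : {mpoly R[n]} :=
  \sum_(m : 'X_{1..n < msize p})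
     (Series.Series (fun k : nat => t ^+ k / (k`!)%:R * (iter k A p)@_m))
       *: 'X_[(m : 'X_{1..n})].

Definition convex_cone (n : nat) (C : {mpoly R[n]} -> Prop) : Prop :=
  C 0 /\
  forall (a b : R) (p q : {mpoly R[n]}), 0 <= a -> 0 <= b -> C p -> C q ->
    C (a *: p + b *: q).

(* C is closed in the LF-topology (inductive limit of the finite-dimensional
   spaces P_d of polynomials of degree < d with their Euclidean topology):
   for every d, C \cap P_d is closed in P_d, where P_d is identified with
   R^{monomials of degree < d} through coordinates. The uniform space of
   functions from a finite type to R carries the product (Euclidean)
   topology. *)
Definition LF_closed (n : nat) (C : {mpoly R[n]} -> Prop) : Prop :=
  forall d : nat,
    @Hierarchy.closed
      (Hierarchy.fct_UniformSpace 'X_{1..n < d} Hierarchy.R_UniformSpace)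
      (fun f : 'X_{1..n < d} -> R =>
         C (\sum_(m : 'X_{1..n < d}) f m *: 'X_[(m : 'X_{1..n})])).

Definition in_DC (n : nat) (C : {mpoly R[n]} -> Prop)
  (T : {mpoly R[n]} -> {mpoly R[n]}) : Prop :=
  in_D T /\ (forall p, C p -> C (T p)).

Definition in_dC (n : nat) (C : {mpoly R[n]} -> Prop)
  (A : {mpoly R[n]} -> {mpoly R[n]}) : Prop :=
  in_d A /\ (forall t : R, 0 <= t -> in_DC C (expop t A)).

(* Main.v *)
Require Import Defs.
From HB Require Import structures.
From mathcomp Require Import all_boot all_algebra.
From Stdlib Require Import Reals.
From mathcomp Require Import Rstruct.
From mathcomp.multinomials Require Import ssrcomplements mpoly.
From mathcomp Require Import zify ring.
From Coquelicot Require Hierarchy Series.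
Set Implicit Arguments.
Unset Strict Implicit.
Unset Printing Implicit Defensive.
From mathcomp Require Import order.
Import order.Order.TTheory GRing.Theory Num.Theory.
Local Open Scope ring_scope.

Section S.
Variable n : nat.
Implicit Types (p q r : {mpoly R[n]}) (m a : 'X_{1..n}).

Lemma derivm_big p m : (msize p <= mdeg m)%nat -> p^`M[m] = 0.
Proof.
move=> H; rewrite mderivmE big_seq big1 // => m' Hm'.
have lt : (mdeg m' < mdeg m)%nat by apply: leq_trans (msize_mdeg_lt Hm') H.
case: (boolP [exists i, (m' i < m i)%nat]) => [/existsP [i Hi]|].
  by rewrite (bigD1 i) //= ffact_small // mul0n mulr0 scale0r.
rewrite negb_exists => /forallP Hall; exfalso.
move: lt; rewrite !mdegE ltnNge => /negP; apply; apply: leq_sum => i _.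
by rewrite leqNgt Hall.
Qed.

Lemma bsum_widen (V : nmodType) k1 k2 (F : 'X_{1..n} -> V) : (k1 <= k2)%nat ->
  (forall m, (k1 <= mdeg m)%nat -> F m = 0) ->
  \sum_(m : 'X_{1..n < k1}) F m = \sum_(m : 'X_{1..n < k2}) F m.
Proof.
move=> le H.
rewrite (big_sub_widen _ 'X_{1..n < k2} xpredT F) /=; last first.
  by move=> x /leq_trans; apply.
by rewrite big_rmcond //= => i; rewrite -leqNgt => /H.
Qed.

Lemma msize_le_coef p k : (forall m, (k <= mdeg m)%nat -> p@_m = 0) ->
  (msize p <= k)%nat.
Proof.
move=> H; rewrite msizeE big_seq.
apply: (big_ind (fun x => x <= k)%nat) => // [x y hx hy|m Hm].
  by rewrite geq_max hx hy.
rewrite ltnNge; apply/negP => /H; move: Hm; rewrite mcoeff_msupp => /eqP; done.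
Qed.

Lemma msize_coef0 p m : (msize p <= mdeg m)%nat -> p@_m = 0.
Proof. by move/msize_mdeg_ge/memN_msupp_eq0. Qed.

Lemma msize_sumX k (f : 'X_{1..n} -> R) :
  (msize (\sum_(m : 'X_{1..n < k}) f m *: 'X_[m]) <= k)%nat.
Proof.
apply: msize_le_coef => m Hm; rewrite raddf_sum big1 // => a _.
rewrite /= mcoeffZ mcoeffX; case: eqP => [E|]; last by rewrite mulr0.
by move: (bmdeg a); rewrite E ltnNge Hm.
Qed.

Lemma msize_deriv p a : (msize (p^`M[a]) <= msize p - mdeg a)%nat.
Proof.
apply: msize_le_coef => m Hm; rewrite mcoeff_mderivm msize_coef0 ?mul0rn //.
rewrite mdegD; lia.
Qed.

Lemma msize_mul_le r1 r2 k1 k2 : (msize r1 <= k1.+1)%nat -> (msize r2 <= k2.+1)%nat ->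
  (msize (r1 * r2) <= (k1 + k2).+1)%nat.
Proof.
have [->|nz1] := eqVneq r1 0; first by rewrite mul0r msize0.
have [->|nz2] := eqVneq r2 0; first by rewrite mulr0 msize0.
move=> h1 h2; rewrite msizeM //.
apply: leq_trans (_ : ((k1.+1 + k2.+1).-1 <= _)%nat); last by rewrite addSn addnS.
by rewrite -!subn1 leq_sub2r // leq_add.
Qed.

Lemma term_size r a p : (msize r <= (mdeg a).+1)%nat -> (msize (r * p^`M[a]) <= msize p)%nat.
Proof.
move=> Hr.
have [->|nz] := eqVneq (p^`M[a]) 0; first by rewrite mulr0 msize0.
have H1 := msize_deriv p a.
have H2 : (0 < msize (p^`M[a]))%nat by rewrite lt0n msize_poly_eq0.
have := @msize_mul_le r (p^`M[a]) (mdeg a) (msize p - mdeg a).-1 Hr.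
have H3 : (0 < msize p - mdeg a)%nat by apply: leq_trans H2 H1.
rewrite prednK // => /(_ H1) /leq_trans; apply; lia.
Qed.

Definition good (L : {mpoly R[n]} -> {mpoly R[n]}) :=
  (forall (x y : R) p q, L (x *: p + y *: q) = x *: L p + y *: L q) /\
  (forall p, (msize (L p) <= msize p)%nat).

Section Good.
Variable L : {mpoly R[n]} -> {mpoly R[n]}.
Hypothesis gL : good L.

Lemma good0 : L 0 = 0.
Proof. by have := gL.1 0 0 0 0; rewrite !scale0r addr0. Qed.
Lemma goodD p q : L (p + q) = L p + L q.
Proof. by have := gL.1 1 1 p q; rewrite !scale1r. Qed.
Lemma goodZ (x : R) p : L (x *: p) = x *: L p.
Proof. by have := gL.1 x 0 p 0; rewrite !scale0r !addr0. Qed.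
Lemma good_sum (I : Type) (s : seq I) (P : pred I) (F : I -> {mpoly R[n]}) :
  L (\sum_(i <- s | P i) F i) = \sum_(i <- s | P i) L (F i).
Proof. exact: (big_morph L goodD good0). Qed.
Lemma good_msize p : (msize (L p) <= msize p)%nat.
Proof. exact: gL.2. Qed.
End Good.

Lemma diffop_wide (q : 'X_{1..n} -> {mpoly R[n]}) p k : (msize p <= k)%nat ->
  diffop q p = \sum_(m : 'X_{1..n < k}) q m * p^`M[m].
Proof.
move=> H; rewrite /diffop; apply: (bsum_widen (F := fun m => q m * p^`M[m])) => // m Hm.
by rewrite derivm_big ?mulr0.
Qed.

Lemma in_d_good A : in_d A -> good A.
Proof.
case=> q [Hq HA]; split.
  move=> x y p1 p2; rewrite !HA.
  set k := (msize p1 + msize p2)%nat.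
  have h1 : (msize p1 <= k)%nat by lia.
  have h2 : (msize p2 <= k)%nat by lia.
  have h3 : (msize (x *: p1 + y *: p2) <= k)%nat.
    have hD := @msizeD_le n R (x *: p1) (y *: p2).
    apply: leq_trans hD _; rewrite geq_max.
    by rewrite !(leq_trans (msizeZ_le _ _)).
  rewrite !(diffop_wide q h1) !(diffop_wide q h2) (diffop_wide q h3).
  rewrite !scaler_sumr -big_split /=; apply: eq_bigr => m _.
  by rewrite mderivmD !mderivmZ mulrDr !scalerAr.
move=> p; rewrite HA /diffop.
have hS := @msize_sum n R _ (index_enum 'X_{1..n < msize p})
  (fun m : 'X_{1..n < msize p} => q m * p^`M[m]) xpredT.
apply: leq_trans hS _.
apply/bigmax_leqP => m _; exact: term_size.
Qed.


Definition mfact (b : 'X_{1..n}) : R := (\prod_(i < n) (b i)`!)%:R.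

Lemma mfact_neq0 b : mfact b != 0.
Proof.
rewrite /mfact pnatr_eq0 -lt0n prodn_gt0 // => i; exact: fact_gt0.
Qed.

Lemma derivX_self b : ('X_[b] : {mpoly R[n]})^`M[b] = mfact b *: 1.
Proof.
apply/mpolyP => m; rewrite mcoeff_mderivm mcoeffZ mcoeff1 mcoeffX.
have [->|nz] := eqVneq m 0%MM.
  rewrite addm0 eqxx mulr1 /mfact; congr (_ *+ _).
  by apply: eq_bigr => i _; rewrite ffactnn.
rewrite mulr0 -{1}[b]addm0 eqm_add2l eq_sym (negbTE nz) mul0rn //.
Qed.

Lemma derivX_other b g : mdeg b = mdeg g -> b != g ->
  ('X_[g] : {mpoly R[n]})^`M[b] = 0.
Proof.
move=> Ed nbg; apply/mpolyP => m; rewrite mcoeff_mderivm mcoeffX mcoeff0.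
case: eqP => [E|]; last by rewrite mul0rn.
exfalso; move: (congr1 mdeg E); rewrite mdegD Ed => /eqP.
rewrite -{1}[mdeg g]addn0 eqn_add2l eq_sym mdeg_eq0 => /eqP Em.
by move: nbg; rewrite E Em addm0 eqxx.
Qed.

Lemma bsum_split (V : nmodType) d (F : 'X_{1..n} -> V) :
  \sum_(a : 'X_{1..n < d.+1}) F a =
  \sum_(a : 'X_{1..n < d}) F a + \sum_(a : 'X_{1..n < d.+1} | mdeg a == d) F a.
Proof.
rewrite (bigID (fun a : 'X_{1..n < d.+1} => mdeg a == d)) /= addrC; congr (_ + _).
rewrite (big_sub_widen _ 'X_{1..n < d.+1} xpredT F) /=; last first.
  by move=> x /ltnW.
apply: eq_bigl => a /=; have := bmdeg a; rewrite ltnS leq_eqVlt.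
by case: eqP => [->|]; rewrite ?ltnn.
Qed.

Section Repr.
Variable L : {mpoly R[n]} -> {mpoly R[n]}.
Hypothesis gL : good L.

Fixpoint qq (d : nat) (b : 'X_{1..n}) : {mpoly R[n]} :=
  match d with
  | 0 => 0
  | d'.+1 => if mdeg b == d' then
        (mfact b)^-1 *: (L 'X_[b] - \sum_(a : 'X_{1..n < d'}) qq d' a * ('X_[b])^`M[a])
      else qq d' b
  end.

Definition qL b := qq (mdeg b).+1 b.

Lemma qq_stable d b : (mdeg b < d)%nat -> qq d b = qL b.
Proof.
elim: d => [//|d IH] Hb.
have [E|NE] := eqVneq (mdeg b) d; first by rewrite /qL E.
rewrite /= (negbTE NE) IH //.
by rewrite ltn_neqAle NE -ltnS.
Qed.

Lemma qL_eq b : qL b = (mfact b)^-1 *: (L 'X_[b] -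
   \sum_(a : 'X_{1..n < mdeg b}) qL a * ('X_[b])^`M[a]).
Proof.
rewrite /qL /= eqxx; congr (_ *: (_ - _)); apply: eq_bigr => a _.
by rewrite qq_stable // bmdeg.
Qed.

Lemma key d g : (mdeg g < d)%nat ->
  \sum_(a : 'X_{1..n < d}) qL a * ('X_[g])^`M[a] = L 'X_[g].
Proof.
elim: d g => [//|d IH] g Hg; rewrite (bsum_split _ (fun a => qL a * ('X_[g])^`M[a])).
have [E|NE] := eqVneq (mdeg g) d.
  rewrite (bigD1 (Sub g Hg : 'X_{1..n < d.+1})) /=; last by rewrite E.
  rewrite [X in _ + (_ + X)]big1 ?addr0; last first.
    move=> a /andP [Ha Hne]; rewrite derivX_other ?mulr0 //.
      by rewrite (eqP Ha) E.
  rewrite derivX_self -scalerAr mulr1 -(qq_stable Hg) /=.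
  rewrite E eqxx scalerA mulfV ?mfact_neq0 // scale1r.
  rewrite [X in _ + (_ - X)](eq_bigr (fun a : 'X_{1..n < d} => qL a * 'X_[g]^`M[a])).
    by rewrite addrC subrK.
  by move=> a _; rewrite qq_stable // bmdeg.
have Hg' : (mdeg g < d)%nat by rewrite ltn_neqAle NE -ltnS.
rewrite IH // big1 ?addr0 // => a /eqP Ha.
by rewrite derivm_big ?mulr0 // msizeX Ha.
Qed.

Lemma qL_size b : (msize (qL b) <= (mdeg b).+1)%nat.
Proof.
elim: (mdeg b).+1 {-2}b (ltnSn (mdeg b)) => [//|k IH] {}b Hb.
rewrite qL_eq; apply: leq_trans (msizeZ_le _ _) _.
have hD := @msizeD_le n R (L 'X_[b]) (- \sum_(a : 'X_{1..n < mdeg b}) qL a * 'X_[b]^`M[a]).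
apply: leq_trans hD _; rewrite geq_max; apply/andP; split.
  by apply: leq_trans (good_msize gL _) _; rewrite msizeX.
rewrite msizeN.
have hS := @msize_sum n R _ (index_enum 'X_{1..n < mdeg b})
  (fun a : 'X_{1..n < mdeg b} => qL a * 'X_[b]^`M[a]) xpredT.
apply: leq_trans hS _.
apply/bigmax_leqP => a _; rewrite -(msizeX R b); apply: term_size.
apply: IH; have := bmdeg a; lia.
Qed.

Lemma good_in_d : in_d L.
Proof.
exists qL; split; first exact: qL_size.
move=> p; rewrite /diffop; set d := msize p.
have Ep : p = \sum_(g : 'X_{1..n < d}) p@_g *: 'X_[g] by apply: mpolywE.
transitivity (L (\sum_(g : 'X_{1..n < d}) p@_g *: 'X_[g])); first by rewrite -Ep.
rewrite good_sum //.
transitivity (\sum_(a : 'X_{1..n < d}) qL a * (\sum_(g : 'X_{1..n < d}) p@_g *: 'X_[g])^`M[a]); last by rewrite -Ep.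
under [RHS]eq_bigr => a _ do rewrite raddf_sum mulr_sumr.
rewrite [RHS]exchange_big /=; apply: eq_bigr => g _.
rewrite (goodZ gL) -(key (bmdeg g)) scaler_sumr; apply: eq_bigr => a _.
by rewrite mderivmZ scalerAr.
Qed.
End Repr.


Lemma good_id : good (fun p => p).
Proof. by split. Qed.

Lemma good_comp L1 L2 : good L1 -> good L2 -> good (L1 \o L2).
Proof.
move=> g1 g2; split=> [x y p q|p] /=; first by rewrite g2.1 g1.1.
exact: leq_trans (good_msize g1 _) (good_msize g2 _).
Qed.

Lemma good_iter T k : good T -> good (iter k T).
Proof.
move=> gT; elim: k => [|k IH] /=; first exact: good_id.
exact: (good_comp gT IH).
Qed.

Definition nrm d p := \sum_(m : 'X_{1..n < d}) `|p@_m|.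

Lemma nrm_ge0 d p : 0 <= nrm d p.
Proof. by apply: sumr_ge0 => m _. Qed.

Lemma coef_le_nrm d p m : (mdeg m < d)%nat -> `|p@_m| <= nrm d p.
Proof.
move=> Hm; rewrite /nrm (bigD1 (Sub m Hm : 'X_{1..n < d})) //= lerDl.
by apply: sumr_ge0.
Qed.

Lemma nrmD d p q : nrm d (p + q) <= nrm d p + nrm d q.
Proof.
rewrite /nrm -big_split /=; apply: ler_sum => m _.
by rewrite mcoeffD ler_normD.
Qed.

Lemma nrmZ d c p : nrm d (c *: p) = `|c| * nrm d p.
Proof.
by rewrite /nrm mulr_sumr; apply: eq_bigr => m _; rewrite mcoeffZ normrM.
Qed.

Lemma nrm0 d : nrm d 0 = 0.
Proof. by rewrite /nrm big1 // => m _; rewrite mcoeff0 normr0. Qed.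

Lemma nrm_sum d (I : Type) (r : seq I) (F : I -> {mpoly R[n]}) :
  nrm d (\sum_(i <- r) F i) <= \sum_(i <- r) nrm d (F i).
Proof.
elim: r => [|i r IH]; first by rewrite !big_nil nrm0.
rewrite !big_cons; apply: le_trans (nrmD _ _ _) _; exact: lerD.
Qed.

Lemma lin_coef L (gL : good L) d v b : (msize v <= d)%nat ->
  (L v)@_b = \sum_(g : 'X_{1..n < d}) v@_g * (L 'X_[g])@_b.
Proof.
move=> Hv; rewrite {1}(mpolywE Hv) good_sum // raddf_sum; apply: eq_bigr => g _.
by rewrite (goodZ gL) /= mcoeffZ.
Qed.

Section Exp.
Variable T : {mpoly R[n]} -> {mpoly R[n]}.
Hypothesis gT : good T.

Lemma T_bound d : exists K, 0 <= K /\ forall p, (msize p <= d)%nat -> nrm d (T p) <= K * nrm d p.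
Proof.
exists (\sum_(g : 'X_{1..n < d}) nrm d (T 'X_[g])); split.
  by apply: sumr_ge0 => g _; exact: nrm_ge0.
move=> p Hp; rewrite {1}(mpolywE Hp) good_sum // .
apply: le_trans (nrm_sum _ _ _) _.
rewrite /nrm [X in _ <= _ * X]/= mulr_sumr; apply: ler_sum => g _.
rewrite (goodZ gT) -/(nrm d _) nrmZ mulrC; apply: ler_wpM2r => //.
rewrite (bigD1 g) //= lerDl; apply: sumr_ge0 => h _; exact: nrm_ge0.
Qed.

Lemma coef_bound p : exists K, 0 <= K /\ forall k m, `|(iter k T p)@_m| <= K ^+ k * nrm (msize p) p.
Proof.
have [K [K0 HK]] := T_bound (msize p).
exists K; split => // k m.
have Hs : (msize (iter k T p) <= msize p)%nat by apply: good_msize (good_iter k gT) _.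
have Hn : nrm (msize p) (iter k T p) <= K ^+ k * nrm (msize p) p.
  elim: k Hs => [|k IH] Hs; first by rewrite expr0 mul1r.
  have Hs' : (msize (iter k T p) <= msize p)%nat by apply: good_msize (good_iter k gT) _.
  rewrite /= exprS -mulrA; apply: le_trans (HK _ Hs') _.
  by apply: ler_wpM2l => //; apply: IH.
case: (ltnP (mdeg m) (msize p)) => Hm.
  by apply: le_trans (coef_le_nrm _ Hm) Hn.
rewrite msize_coef0 ?normr0; last exact: leq_trans Hs Hm.
by apply: mulr_ge0; [exact: exprn_ge0 | exact: nrm_ge0].
Qed.

End Exp.

End S.

Notation exs a := (@Series.ex_series Hierarchy.R_AbsRing Hierarchy.R_NormedModule a).
Notation iss a l := (@Series.is_series Hierarchy.R_AbsRing Hierarchy.R_NormedModule a l).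

Lemma RabsE (x : R) : Rabs x = `|x|. Proof. by []. Qed.

Lemma factRE k : Factorial.fact k = k`!.
Proof. by elim: k => // k IH; rewrite factS -IH. Qed.

Lemma exp_ex (x : R) : exs (fun k : nat => x ^+ k / (k`!)%:R).
Proof.
have [l Hl] := exist_exp x; exists l.
apply: (@Series.is_series_ext Hierarchy.R_AbsRing Hierarchy.R_NormedModule (fun i => Rmult (Rinv (INR (Factorial.fact i))) (pow x i))).
  by move=> k; rewrite RinvE INRE RpowE RmultE factRE mulrC.
exact/Series.is_series_Reals.
Qed.

Lemma ex_dom (c : nat -> R) (A B t : R) : 0 <= A ->
  (forall k, `|c k| <= A ^+ k * B) ->
  exs (fun k : nat => Rabs (t ^+ k / (k`!)%:R * c k)).
Proof.
move=> A0 Hc.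
apply: (@Series.ex_series_le Hierarchy.R_AbsRing Hierarchy.R_CompleteNormedModule _ (fun k : nat => B * ((`|t| * A) ^+ k / (k`!)%:R))).
  move=> k; change (Rabs (Rabs (t ^+ k / (k`!)%:R * c k)) <= B * ((`|t| * A) ^+ k / (k`!)%:R))%R.
  rewrite Rabs_Rabsolu; apply/RleP; rewrite RabsE.
  rewrite normrM normf_div normrX normr_nat.
  have -> : (B * ((`|t| * A) ^+ k / k`!%:R))%R = `|t| ^+ k / k`!%:R * (A ^+ k * B).
    by rewrite ?RmultE ?RdivE exprMn; ring.
  apply: ler_wpM2l => //; by rewrite mulr_ge0 ?exprn_ge0 ?invr_ge0.
apply: (@Series.ex_series_scal_l Hierarchy.R_AbsRing Hierarchy.R_NormedModule B); exact: exp_ex.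
Qed.

Lemma Series0 : Series.Series (fun _ => 0) = 0.
Proof.
rewrite (Series.Series_ext _ (fun _ : nat => Rmult 0 0)); last by move=> k; rewrite RmultE mulr0.
by rewrite Series.Series_scal_l RmultE mul0r.
Qed.

Definition evF : Hierarchy.Filter (@Hierarchy.eventually) :=
  @Hierarchy.filter_filter _ _ Hierarchy.eventually_filter.

Lemma fct_lim (I : finType) (f : nat -> I -> R) (g : I -> R) :
  (forall i, Hierarchy.filterlim (fun N => f N i) Hierarchy.eventually (@Hierarchy.locally Hierarchy.R_UniformSpace (g i))) ->
  Hierarchy.filterlim f Hierarchy.eventually
    (@Hierarchy.locally (Hierarchy.fct_UniformSpace I Hierarchy.R_UniformSpace) g).
Proof.
move=> H P [eps HP].
have Hl : forall l : seq I, Hierarchy.eventually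
    (fun N => forall i, i \in l -> @Hierarchy.ball Hierarchy.R_UniformSpace (g i) eps (f N i)).
  elim=> [|i l IH].
    by refine (@Hierarchy.filter_forall nat Hierarchy.eventually evF _ (fun N i => _)); rewrite in_nil.
  have Hi := H i _ (@Hierarchy.locally_ball Hierarchy.R_UniformSpace (g i) eps).
  have HA := @Hierarchy.filter_and nat Hierarchy.eventually evF _ _ Hi IH.
  refine (@Hierarchy.filter_imp nat Hierarchy.eventually evF _ _ (fun N HN => _) HA).
  case: HN => h1 h2 j.
  by rewrite inE => /orP [/eqP -> | /h2].
refine (@Hierarchy.filter_imp nat Hierarchy.eventually evF _ _ (fun N HN => _) (Hl (enum I))).
apply: HP => i; apply: HN.
by rewrite mem_enum.
Qed.

Lemma sum_nE (a : nat -> R) N : @Hierarchy.sum_n Hierarchy.R_AbelianMonoid a N = \sum_(k < N.+1) a k.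
Proof.
elim: N => [|N IH]; first by rewrite Hierarchy.sum_O big_ord1.
by rewrite Hierarchy.sum_Sn IH [in RHS]big_ord_recr.
Qed.

Lemma iss_const (a : nat -> R) l :
  (forall N, @Hierarchy.sum_n Hierarchy.R_AbelianMonoid a N = l) -> iss a l.
Proof.
move=> H.
refine (@Hierarchy.filterlim_ext nat _ Hierarchy.eventually _ evF (fun _ => l) _ _ (@Hierarchy.filterlim_const _ Hierarchy.R_UniformSpace _ evF l)).
by move=> N; rewrite H.
Qed.

Lemma Series_sum (I : Type) (r : seq I) (F : I -> nat -> R) : (forall i, exs (F i)) ->
  exs (fun k => \sum_(i <- r) F i k) /\ Series.Series (fun k => \sum_(i <- r) F i k) = \sum_(i <- r) Series.Series (F i).
Proof.
move=> H; elim: r => [|i r [IHe IHs]].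
  have Z : iss (fun k => \sum_(i <- [::]) F i k) 0.
    apply: iss_const => N; rewrite sum_nE big1 // => k _; by rewrite big_nil.
  split; first by exists 0.
  by rewrite big_nil; exact: (Series.is_series_unique _ _ Z).
split.
  apply: (@Series.ex_series_ext Hierarchy.R_AbsRing Hierarchy.R_NormedModule
     (fun k => Rplus (F i k) (\sum_(j <- r) F j k))).
    by move=> k; rewrite big_cons.
  exact: (@Series.ex_series_plus Hierarchy.R_AbsRing Hierarchy.R_NormedModule _ _ (H i) IHe).
rewrite big_cons -IHs.
transitivity (Rplus (Series.Series (F i)) (Series.Series (fun k => \sum_(j <- r) F j k))); last by [].
rewrite -(Series.Series_plus _ _ (H i) IHe).
by apply: Series.Series_ext => k; rewrite big_cons.
Qed.

Lemma sum_f_R0E (a : nat -> R) N : sum_f_R0 a N = \sum_(k < N.+1) a k.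
Proof.
elim: N => [|N IH] /=; first by rewrite big_ord1.
by rewrite IH [in RHS]big_ord_recr.
Qed.

Lemma binom_alt (t : R) N :
  \sum_(k < N.+1) (-t) ^+ k / (k`!)%:R * (t ^+ (N - k) / ((N - k)`!)%:R) = (N == 0%nat)%:R.
Proof.
transitivity ((t + - t) ^+ N / (N`!)%:R); last first.
  by rewrite subrr expr0n; case: N => [|N] /=; rewrite ?fact0 ?divr1 ?mul0r.
rewrite exprDn mulr_suml; apply: eq_bigr => k _.
have Hk : (k <= N)%nat by rewrite -ltnS.
rewrite -(bin_fact Hk) !natrM -mulr_natr.
have h1 : ('C(N, k))%:R != 0 :> R by rewrite pnatr_eq0 -lt0n bin_gt0.
have h2 : (k`!)%:R != 0 :> R by rewrite pnatr_eq0 -lt0n fact_gt0.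
have h3 : ((N - k)`!)%:R != 0 :> R by rewrite pnatr_eq0 -lt0n fact_gt0.
by field; rewrite ?h1 ?h2 ?h3 ?mulf_neq0.
Qed.

Section S2.
Variable n : nat.
Variable T : {mpoly R[n]} -> {mpoly R[n]}.
Hypothesis gT : good T.
Implicit Types (p q : {mpoly R[n]}) (m : 'X_{1..n}).

Definition cf t p m k := t ^+ k / (k`!)%:R * (iter k T p)@_m.

Lemma ex_cf_abs t p m : exs (fun k => Rabs (cf t p m k)).
Proof.
have [K [K0 HK]] := coef_bound gT p.
exact: (ex_dom (c := fun k => (iter k T p)@_m) (B := nrm (msize p) p) t K0).
Qed.

Lemma ex_cf t p m : exs (cf t p m).
Proof. exact: (Series.ex_series_Rabs _ (ex_cf_abs t p m)). Qed.

Definition Sx t p m := Series.Series (cf t p m).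

Lemma Sx_out t p m : (msize p <= mdeg m)%nat -> Sx t p m = 0.
Proof.
move=> H; rewrite /Sx (Series.Series_ext _ (fun _ => 0)) ?Series0 // => k.
rewrite /cf msize_coef0 ?mulr0 //.
exact: leq_trans (good_msize (good_iter k gT) p) H.
Qed.

Lemma expopE t p : expop t T p = \sum_(m : 'X_{1..n < msize p}) Sx t p m *: 'X_[m].
Proof. by []. Qed.

Lemma coef_expop t p m : (expop t T p)@_m = Sx t p m.
Proof.
rewrite expopE; case: (leqP (msize p) (mdeg m)) => H.
  have hs := msize_sumX (msize p) (fun m => Sx t p m).
  rewrite (Sx_out t H). apply: msize_coef0. exact: leq_trans hs H.
exact: (mcoeff_mpoly (fun m => Sx t p m) H).
Qed.

Lemma Sx_lin t x y p q m : Sx t (x *: p + y *: q) m = x * Sx t p m + y * Sx t q m.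
Proof.
rewrite /Sx.
rewrite (Series.Series_ext _ (fun k => Rplus (Rmult x (cf t p m k)) (Rmult y (cf t q m k)))); last first.
  move=> k; rewrite /cf (good_iter k gT).1 mcoeffD !mcoeffZ RplusE !RmultE.
  ring.
rewrite Series.Series_plus; last first.
- exact: (@Series.ex_series_scal_l Hierarchy.R_AbsRing Hierarchy.R_NormedModule y _ (ex_cf t q m)).
- exact: (@Series.ex_series_scal_l Hierarchy.R_AbsRing Hierarchy.R_NormedModule x _ (ex_cf t p m)).
by rewrite !Series.Series_scal_l.
Qed.

Lemma good_expop t : good (expop t T).
Proof.
split.
  move=> x y p q; apply/mpolyP => m.
  by rewrite mcoeffD !mcoeffZ !coef_expop Sx_lin.
move=> p; rewrite expopE; exact: (msize_sumX (msize p) (fun m => Sx t p m)).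
Qed.

Lemma in_d_expop t : in_d (expop t T).
Proof. exact: good_in_d (good_expop t). Qed.

Lemma expop_C C t p : convex_cone C -> LF_closed C ->
  (forall q, C q -> C (T q)) -> 0 <= t -> C p -> C (expop t T p).
Proof.
move=> [C0 Cc] Ccl HT t0 Cp.
have Citer k : C (iter k T p) by elim: k => //= k IH; exact: HT.
set d := msize p.
pose ps N := \sum_(k < N) (t ^+ k / (k`!)%:R) *: iter k T p.
have Cps N : C (ps N).
  elim: N => [|N IH]; rewrite /ps ?big_ord0 // big_ord_recr /=.
  have := Cc 1 (t ^+ N / (N`!)%:R) (ps N) (iter N T p) ler01 _ IH (Citer N).
  rewrite scale1r; apply.
  by apply: divr_ge0; [exact: exprn_ge0 | exact: ler0n].
have Hsz N : (msize (ps N) <= d)%nat.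
  have hS := @msize_sum n R _ (index_enum 'I_N)
    (fun k : 'I_N => (t ^+ k / (k`!)%:R) *: iter k T p) xpredT.
  apply: leq_trans hS _; apply/bigmax_leqP => k _.
  apply: leq_trans (msizeZ_le _ _) _; exact: (good_msize (good_iter k gT)).
have Hcoef N m : (ps N.+1)@_m = @Hierarchy.sum_n Hierarchy.R_AbelianMonoid (cf t p m) N.
  by rewrite sum_nE /ps raddf_sum; apply: eq_bigr => k _; rewrite /= mcoeffZ.
have Hcl := Ccl d.
pose F N := fun m : 'X_{1..n < d} => (ps N.+1)@_m.
pose y := fun m : 'X_{1..n < d} => Sx t p m.
have : (fun f : 'X_{1..n < d} -> R => C (\sum_(m : 'X_{1..n < d}) f m *: 'X_[m])) y.
  apply: (@Hierarchy.closed_filterlim nat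
    (Hierarchy.fct_UniformSpace 'X_{1..n < d} Hierarchy.R_UniformSpace)
    Hierarchy.eventually
    (Hierarchy.Proper_StrongProper _ Hierarchy.eventually_filter) F _ y _ _ Hcl).
    apply: fct_lim => m.
    apply: (Hierarchy.filterlim_ext (fun N => @Hierarchy.sum_n Hierarchy.R_AbelianMonoid (cf t p m) N)).
      by move=> N; rewrite /F Hcoef.
    exact: (Series.Series_correct _ (ex_cf t p m)).
  move=> N; rewrite /F -(mpolywE (Hsz N.+1)); exact: Cps.
by rewrite /= expopE.
Qed.

Lemma stepF t p b N :
  \sum_(g : 'X_{1..n < msize p}) sum_f_R0 (fun k => cf (-t) 'X_[g] b k * cf t p g (N - k)) N
  = (N == 0%nat)%:R * (iter N T p)@_b.
Proof.
under eq_bigr => g _ do rewrite sum_f_R0E.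
rewrite exchange_big /= -(binom_alt t) mulr_suml; apply: eq_bigr => k _.
have Hk : (k <= N)%nat by rewrite -ltnS.
have Hs : (msize (iter (N - k) T p) <= msize p)%nat by apply: good_msize (good_iter _ gT) _.
have -> : iter N T p = iter k T (iter (N - k) T p) by rewrite -iterD subnKC.
rewrite (lin_coef (good_iter k gT) b Hs) mulr_sumr; apply: eq_bigr => g _.
rewrite /cf; ring.
Qed.

Lemma Sx_inv t p b : Sx (-t) (expop t T p) b = p@_b.
Proof.
set d := msize p; set u := expop t T p.
have Hu : (msize u <= d)%nat by apply: good_msize (good_expop t) p.
pose a g := cf (-t) ('X_[g] : {mpoly R[n]}) b.
rewrite /Sx (Series.Series_ext _ (fun j => \sum_(g : 'X_{1..n < d}) Sx t p g * a g j)); last first.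
  move=> j; rewrite /cf (lin_coef (good_iter j gT) b Hu) mulr_sumr; apply: eq_bigr => g _.
  by rewrite coef_expop /a /cf; ring.
have Hex g : exs (fun j => Sx t p g * a g j).
  exact: (@Series.ex_series_scal_l Hierarchy.R_AbsRing Hierarchy.R_NormedModule _ _ (ex_cf _ _ _)).
have E1 := (@Series_sum _ (index_enum 'X_{1..n < d})
  (fun (g : 'X_{1..n < d}) j => Sx t p g * a g j) (fun g : 'X_{1..n < d} => Hex g)).2.
simpl in E1; rewrite E1.
have Hm g : iss (fun N => sum_f_R0 (fun k => a g k * cf t p g (N - k)) N)
    (Series.Series (a g) * Sx t p g).
  apply: Series.is_series_mult.
  - exact: Series.Series_correct (ex_cf _ _ _).
  - exact: Series.Series_correct (ex_cf _ _ _).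
  - exact: ex_cf_abs.
  - exact: ex_cf_abs.
have Hex2 g : exs (fun N => sum_f_R0 (fun k => a g k * cf t p g (N - k)) N).
  by exists (Series.Series (a g) * Sx t p g).
transitivity (\sum_(g : 'X_{1..n < d}) Series.Series (fun N => sum_f_R0 (fun k => a g k * cf t p g (N - k)) N)).
  apply: eq_bigr => g _; rewrite (Series.is_series_unique _ _ (Hm g)).
  transitivity (Rmult (Sx t p g) (Series.Series (a g))); first exact: Series.Series_scal_l.
  by rewrite RmultE mulrC.
have E2 := (@Series_sum _ (index_enum 'X_{1..n < d})
  (fun (g : 'X_{1..n < d}) N => sum_f_R0 (fun k => a g k * cf t p g (N - k)) N) (fun g : 'X_{1..n < d} => Hex2 g)).2.
simpl in E2; rewrite -E2.
rewrite (Series.Series_ext _ (fun N => (N == 0%nat)%:R * (iter N T p)@_b)); last first.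
  by move=> N; rewrite /a stepF.
apply: Series.is_series_unique; apply: iss_const => N.
rewrite sum_nE big_ord_recl /= mul1r big1 ?addr0 // => k _.
by rewrite mul0r.
Qed.

Lemma expop_inj t p : expop t T p = 0 -> p = 0.
Proof.
move=> H; apply/mpolyP => b; rewrite mcoeff0 -(Sx_inv t p b) H.
by apply: Sx_out; rewrite msize0.
Qed.

End S2.

Unset Implicit Arguments.

Theorem corollary5p6 (n : nat) (C : {mpoly R[n]} -> Prop) :
  convex_cone C -> LF_closed C ->
  forall T : {mpoly R[n]} -> {mpoly R[n]}, in_DC C T -> in_dC C T.
Proof.
move=> Cc Ccl T [[dT injT] CT].
have gT := in_d_good dT.
split=> // t t0; split; first split.
- exact: in_d_expop gT t.
- exact: expop_inj gT t.
- move=> p Cp; apply: (expop_C gT Cc Ccl CT _ Cp); exact: t0.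
Qed.
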